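(* Let $h=(h_1,\dots,h_n):\mathbb C\to\mathbb R^n$ be a branched minimal immersion, write $\frac{\partial h_i}{\partial z}(z)=\sum_{j=0}^\infty c^i_jz^j$ and $c_j=(c^1_j,\dots,c^n_j)\in\mathbb C^n$. Then $h$ is holomorphic up to a rigid motion if and only if $g(c_m,c_k)=0$ for all integers $m,k\geq0$, where $g(u,v)=\sum_{i=1}^n u_iv_i$ is the standard complex bilinear form on $\mathbb C^n$.
   Context: A branched minimal immersion is a nonconstant smooth map that is harmonic and conformal. $h$ is holomorphic up to a rigid motion if its image lies in an even-dimensional affine subspace $b+W\subset\mathbb R^n$ and there is a linear $J:W\to W$ with $J^2=-I$ preserving the Euclidean inner product such that $dh\circ j=J\circ dh$, $j$ the standard complex structure on $\mathbb C$ (equivalently $Jh_x=h_y$, $Jh_y=-h_x$). *)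

(* Defs.v *)
From Stdlib Require Import Reals Arith Lia List.
From Coquelicot Require Import Coquelicot.
Open Scope R_scope.

Definition idx (n : nat) : Type := { i : nat | (i < n)%nat }.
Definition vec (n : nat) : Type := idx n -> R.

Fixpoint rsum (m : nat) (f : nat -> R) : R :=
  match m with O => 0 | S k => rsum k f + f k end.
Fixpoint csum (m : nat) (f : nat -> C) : C :=
  match m with O => RtoC 0 | S k => Cplus (csum k f) (f k) end.

Definition fsumR (n : nat) (f : idx n -> R) : R :=
  rsum n (fun i => match lt_dec i n with
                   | left H => f (exist _ i H) | right _ => 0 end).
Definition fsumC (n : nat) (f : idx n -> C) : C :=
  csum n (fun i => match lt_dec i n with
                   | left H => f (exist _ i H) | right _ => RtoC 0 end).

Definition dotR (n : nat) (u v : vec n) : R := fsumR n (fun i => u i * v i).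
Definition gC (n : nat) (u v : idx n -> C) : C := fsumC n (fun i => Cmult (u i) (v i)).

Definition pdx (f : R -> R -> R) : R -> R -> R := fun x y => Derive (fun t => f t y) x.
Definition pdy (f : R -> R -> R) : R -> R -> R := fun x y => Derive (fun t => f x t) y.

Fixpoint iterD (w : list bool) (f : R -> R -> R) : R -> R -> R :=
  match w with
  | nil => f
  | cons b w' => (if b then pdx else pdy) (iterD w' f)
  end.

Definition smooth2 (f : R -> R -> R) : Prop :=
  forall (w : list bool) (x y : R),
    ex_derive (fun t => iterD w f t y) x /\
    ex_derive (fun t => iterD w f x t) y /\
    continuity_2d_pt (iterD w f) x y.

(* branched minimal immersion h : C -> R^n, h i x y = h_i(x + i y) *)
Definition branched_minimal_immersion (n : nat) (h : idx n -> R -> R -> R) : Prop :=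
  (exists x1 y1 x2 y2, (fun i => h i x1 y1) <> (fun i => h i x2 y2)) /\
  (forall i, smooth2 (h i)) /\
  (forall i x y, pdx (pdx (h i)) x y + pdy (pdy (h i)) x y = 0) /\
  (forall x y,
      dotR n (fun i => pdx (h i) x y) (fun i => pdy (h i) x y) = 0 /\
      dotR n (fun i => pdx (h i) x y) (fun i => pdx (h i) x y) =
      dotR n (fun i => pdy (h i) x y) (fun i => pdy (h i) x y)).

Definition dz (f : R -> R -> R) (x y : R) : C :=
  (pdx f x y / 2, - (pdy f x y) / 2).

Definition lincomb (n m : nat) (a : nat -> R) (e : nat -> vec n) : vec n :=
  fun i => rsum m (fun j => a j * e j i).

Definition in_span (n m : nat) (e : nat -> vec n) (v : vec n) : Prop :=
  exists a : nat -> R, v = lincomb n m a e.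
Definition lin_indep (n m : nat) (e : nat -> vec n) : Prop :=
  forall a : nat -> R, lincomb n m a e = (fun _ => 0) ->
    forall j, (j < m)%nat -> a j = 0.

Definition holomorphic_up_to_rigid_motion (n : nat) (h : idx n -> R -> R -> R) : Prop :=
  exists (b : vec n) (k : nat) (e : nat -> vec n) (J : vec n -> vec n),
    let W := in_span n (2 * k) e in
    lin_indep n (2 * k) e /\
    (forall x y, W (fun i => h i x y - b i)) /\
    (forall u, W u -> W (J u)) /\
    (forall u v a, W u -> W v ->
        J (fun i => a * u i + v i) = (fun i => a * J u i + J v i)) /\
    (forall u, W u -> J (J u) = (fun i => - u i)) /\
    (forall u v, W u -> W v -> dotR n (J u) (J v) = dotR n u v) /\
    (forall x y,
        J (fun i => pdx (h i) x y) = (fun i => pdy (h i) x y) /\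
        J (fun i => pdy (h i) x y) = (fun i => - pdx (h i) x y)).

(* Main.v *)
Require Import Defs.
From Stdlib Require Import Reals.
From Coquelicot Require Import Coquelicot.
From Stdlib Require Import Classical ProofIrrelevance FunctionalExtensionality.
From mathcomp Require Import all_boot all_algebra.
From mathcomp Require Import Rstruct.
Import GRing.Theory Num.Theory.
Open Scope R_scope.

Set Implicit Arguments. Unset Strict Implicit. Unset Printing Implicit Defensive.
Local Open Scope ring_scope.

Definition dp (F : ringType) n (u v : 'rV[F]_n) : F := (u *m v^T) 0 0.

Definition AM (F : ringType) n (a : nat -> 'rV[F]_n) N : 'M[F]_(N, n) :=
  \matrix_(j < N) a j.
Definition MM (F : ringType) n (a b : nat -> 'rV[F]_n) N : 'M[F]_(N + N, n) :=
  col_mx (AM a N) (AM b N).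
Definition TT (F : ringType) n (a b : nat -> 'rV[F]_n) N : 'M[F]_(N + N, n) :=
  col_mx (- AM b N) (AM a N).
Definition SS (F : ringType) N : 'M[F]_(N + N) :=
  block_mx 0 (- 1%:M) 1%:M 0.

Lemma TT_SS (F : ringType) n a b N : @TT F n a b N = SS F N *m MM a b N.
Proof.
by rewrite /TT /SS /MM mul_block_col !mul0mx !mul1mx add0r addr0 mulNmx mul1mx.
Qed.

Lemma SS_SS (F : ringType) N : SS F N *m SS F N = - 1%:M.
Proof.
rewrite /SS mulmx_block !mul0mx !mulmx0 !add0r !addr0 !mulmxN !mul1mx.
by rewrite mulNmx mulmx1 (@scalar_mx_block _ N N 1) opp_block_mx oppr0.
Qed.

Definition iso (F : ringType) n (a b : nat -> 'rV[F]_n) :=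
  forall m k, dp (a m) (a k) = dp (b m) (b k) /\ dp (a m) (b k) = - dp (b m) (a k).

Lemma AM_gram (F : comRingType) n (a b : nat -> 'rV[F]_n) N :
  AM a N *m (AM b N)^T = \matrix_(i < N, j < N) dp (a i) (b j).
Proof.
apply/matrixP => i j; rewrite !mxE /dp !mxE.
by apply: eq_bigr => k _; rewrite !mxE.
Qed.

Lemma dpC (F : comRingType) n (u v : 'rV[F]_n) : dp u v = dp v u.
Proof. by rewrite /dp !mxE; apply: eq_bigr => k _; rewrite !mxE mulrC. Qed.

Lemma SS_gram (F : comRingType) n (a b : nat -> 'rV[F]_n) N : iso a b ->
  SS F N *m (MM a b N *m (MM a b N)^T) *m (SS F N)^T = MM a b N *m (MM a b N)^T.
Proof.
move=> Hiso.
have E1 : AM a N *m (AM a N)^T = AM b N *m (AM b N)^T.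
  by rewrite !AM_gram; apply/matrixP => i j; rewrite !mxE (Hiso i j).1.
have E2 : AM a N *m (AM b N)^T = - (AM b N *m (AM a N)^T).
  by rewrite !AM_gram; apply/matrixP => i j; rewrite !mxE (Hiso i j).2.
rewrite /MM /SS tr_col_mx mul_col_row tr_block_mx !trmx0 raddfN /= tr_scalar_mx.
rewrite mulmx_block !mul0mx !add0r !addr0 !mulNmx !mul1mx.
rewrite mulmx_block !mulmx0 !add0r !addr0 !mulmxN !mulmx1 !opprK.
by rewrite E2 opprK -E1.
Qed.

Lemma vvT0 (F : realFieldType) n (v : 'rV[F]_n) : v *m v^T = 0 -> v = 0.
Proof.
move=> H; have := congr1 (fun M : 'M[F]_1 => M 0 0) H; rewrite !mxE => Hs.
have H0 : forall k, v 0 k * v 0 k = 0.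
  move=> k; move/eqP: Hs; rewrite psumr_eq0; last first.
    by move=> i _; rewrite mxE -expr2 sqr_ge0.
  by move/allP/(_ k (mem_index_enum _)); rewrite mxE => /eqP.
apply/matrixP => i k; rewrite [i]ord1 mxE.
by have := H0 k; move/eqP; rewrite mulf_eq0 orbb => /eqP.
Qed.

Lemma KL (F : realFieldType) n (a b : nat -> 'rV[F]_n) N (D : 'rV[F]_(N + N)) :
  iso a b -> D *m MM a b N = 0 -> D *m TT a b N = 0.
Proof.
move=> Hiso HD; apply: vvT0.
have -> : D *m TT a b N *m (D *m TT a b N)^T =
   D *m (SS F N *m (MM a b N *m (MM a b N)^T) *m (SS F N)^T) *m D^T.
  by rewrite TT_SS !trmx_mul !mulmxA.
by rewrite (SS_gram _ Hiso) !mulmxA HD !mul0mx.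
Qed.

Lemma solveJ (F : realFieldType) n (a b : nat -> 'rV[F]_n) N :
  iso a b -> MM a b N *m (pinvmx (MM a b N) *m TT a b N) = TT a b N.
Proof.
move=> Hiso; set M := MM a b N; set P := M *m pinvmx M.
have HP : (P - 1%:M) *m M = 0.
  by rewrite mulmxBl mul1mx /P mulmxKpV ?submx_refl // subrr.
have HT : (P - 1%:M) *m TT a b N = 0.
  apply/row_matrixP => i; rewrite row_mul row0; apply: KL => //.
  by rewrite -row_mul HP row0.
apply/eqP; rewrite -subr_eq0.
by move: HT; rewrite mulmxBl mul1mx mulmxA => /eqP.
Qed.

Lemma MM_rowa (F : ringType) n (a b : nat -> 'rV[F]_n) N (j : 'I_N) :
  row (lshift N j) (MM a b N) = a j.
Proof. by rewrite /MM rowKu /AM rowK. Qed.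
Lemma MM_rowb (F : ringType) n (a b : nat -> 'rV[F]_n) N (j : 'I_N) :
  row (rshift N j) (MM a b N) = b j.
Proof. by rewrite /MM rowKd /AM rowK. Qed.
Lemma rowNN (F : ringType) m n (i : 'I_m) (A : 'M[F]_(m, n)) : row i (- A) = - row i A.
Proof. by apply/matrixP => x y; rewrite !mxE. Qed.

Lemma TT_rowa (F : ringType) n (a b : nat -> 'rV[F]_n) N (j : 'I_N) :
  row (lshift N j) (TT a b N) = - b j.
Proof. by rewrite /TT rowKu rowNN /AM rowK. Qed.
Lemma TT_rowb (F : ringType) n (a b : nat -> 'rV[F]_n) N (j : 'I_N) :
  row (rshift N j) (TT a b N) = a j.
Proof. by rewrite /TT rowKd /AM rowK. Qed.

Lemma MMX_pt (F : ringType) n (a b : nat -> 'rV[F]_n) N Y :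
  MM a b N *m Y = TT a b N ->
  forall l, (l < N)%N -> a l *m Y = - b l /\ b l *m Y = a l.
Proof.
move=> H l Hl; have := congr1 (row (lshift N (Ordinal Hl))) H.
have := congr1 (row (rshift N (Ordinal Hl))) H.
by rewrite !row_mul MM_rowa MM_rowb TT_rowa TT_rowb /= => -> ->.
Qed.

Lemma pt_MMX (F : ringType) n (a b : nat -> 'rV[F]_n) N Y :
  (forall l, (l < N)%N -> a l *m Y = - b l /\ b l *m Y = a l) ->
  MM a b N *m Y = TT a b N.
Proof.
move=> H; rewrite /MM /TT mul_col_mx; congr col_mx; apply/row_matrixP => j;
  by rewrite row_mul ?rowNN /AM !rowK ?(H j (ltn_ord j)).1 ?(H j (ltn_ord j)).2.
Qed.

Lemma a_sub (F : fieldType) n (a b : nat -> 'rV[F]_n) N j :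
  (j < N)%N -> (a j <= MM a b N)%MS /\ (b j <= MM a b N)%MS.
Proof.
move=> Hj; split.
  by rewrite -(MM_rowa a b (Ordinal Hj)) row_sub.
by rewrite -(MM_rowb a b (Ordinal Hj)) row_sub.
Qed.

Lemma MM_mono (F : fieldType) n (a b : nat -> 'rV[F]_n) N N' :
  (N <= N')%N -> (MM a b N <= MM a b N')%MS.
Proof.
move=> HN; rewrite /MM col_mx_sub; apply/andP; split; apply/row_subP => j;
  rewrite /AM rowK; have Hj : (j < N')%N by apply: leq_trans (ltn_ord j) HN.
  exact: (a_sub a b Hj).1.
exact: (a_sub a b Hj).2.
Qed.

Lemma max_rank (F : fieldType) n (a b : nat -> 'rV[F]_n) :
  exists N0, forall N', (\rank (MM a b N') <= \rank (MM a b N0))%N.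
Proof.
apply: NNPP => H.
have Hk : forall k, exists N, (k <= \rank (MM a b N))%N.
  elim=> [|k [N HN]]; first by exists 0%N.
  have [N' HN'] : exists N', ~ (\rank (MM a b N') <= \rank (MM a b N))%N.
    apply: not_all_ex_not => H'; apply: H; by exists N.
  exists N'; have HN'' : (\rank (MM a b N) < \rank (MM a b N'))%N.
    by rewrite ltnNge; apply/negP.
  exact: leq_ltn_trans HN HN''.
have [N HN] := Hk n.+1.
by have := rank_leq_col (MM a b N); rewrite leqNgt (leq_trans _ HN).
Qed.

Lemma stab (F : fieldType) n (a b : nat -> 'rV[F]_n) N0 :
  (forall N', (\rank (MM a b N') <= \rank (MM a b N0))%N) ->
  forall j, (a j <= MM a b N0)%MS /\ (b j <= MM a b N0)%MS.
Proof.
move=> Hmax j; set N' := maxn N0 j.+1.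
have H1 : (MM a b N0 <= MM a b N')%MS by apply: MM_mono; rewrite leq_maxl.
have H2 : (MM a b N' <= MM a b N0)%MS.
  by rewrite -(mxrank_leqif_sup H1) eqn_leq Hmax mxrankS.
have Hj : (j < N')%N by rewrite leq_maxr.
have [Ha Hb] := a_sub a b Hj.
by split; apply: submx_trans H2.
Qed.

Lemma gram_helper (F : comRingType) p q r m (A : 'M[F]_(p, q)) (B : 'M[F]_(q, m)) (C : 'M[F]_(r, q)) :
  (A *m B) *m (C *m B)^T = A *m (B *m B^T) *m C^T.
Proof. by rewrite trmx_mul !mulmxA. Qed.

Lemma LA_main (F : realFieldType) n (a b : nat -> 'rV[F]_n) : iso a b ->
  exists (r : nat) (E : 'M[F]_(r, n)) (X : 'M[F]_n),
   [/\ row_free E, ~~ odd r,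
    (forall j, (a j <= E)%MS /\ (b j <= E)%MS),
    (forall j, a j *m X = - b j /\ b j *m X = a j) &
    [/\ (forall u : 'rV_n, (u <= E)%MS -> (u *m X <= E)%MS),
     (forall u : 'rV_n, (u <= E)%MS -> u *m X *m X = - u) &
     (forall u v : 'rV_n, (u <= E)%MS -> (v <= E)%MS -> dp (u *m X) (v *m X) = dp u v)]].
Proof.
move=> Hiso; have [N0 Hmax] := max_rank a b.
set M := MM a b N0; set X := pinvmx M *m TT a b N0.
have HX : M *m X = TT a b N0 by apply: solveJ.
have Hst := stab Hmax.
have F3 : forall (k1 : nat) (U : 'M_(k1, n)), (U <= M)%MS -> U *m X = U *m pinvmx M *m SS F N0 *m M.
  move=> k1 U HU; rewrite -{1}(mulmxKpV HU) -mulmxA HX TT_SS.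
  by rewrite mulmxA.
have F3' : forall (k1 : nat) (U : 'M_(k1, n)), (U <= M)%MS -> (U *m X <= M)%MS.
  by move=> k1 U HU; rewrite F3 // submxMl.
have F4 : forall (k1 : nat) (U : 'M_(k1, n)), (U <= M)%MS -> U *m X *m X = - U.
  move=> k1 U HU; rewrite (F3 _ U HU).
  rewrite -(mulmxA (U *m pinvmx M *m SS F N0) M X) HX TT_SS.
  rewrite (mulmxA (U *m pinvmx M *m SS F N0) (SS F N0) (MM a b N0)).
  rewrite -(mulmxA (U *m pinvmx M) (SS F N0) (SS F N0)) SS_SS.
  by rewrite mulmxN mulmx1 mulNmx (mulmxKpV HU).
have F5 : forall (k1 k2 : nat) (U : 'M_(k1, n)) (V : 'M_(k2, n)), (U <= M)%MS -> (V <= M)%MS ->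
    U *m X *m (V *m X)^T = U *m V^T.
  move=> k1 k2 U V HU HV.
  have eU : U *m X = (U *m pinvmx M) *m (SS F N0 *m M) by rewrite (F3 _ U HU) -(mulmxA (U *m pinvmx M)).
  have eV : V *m X = (V *m pinvmx M) *m (SS F N0 *m M) by rewrite (F3 _ V HV) -(mulmxA (V *m pinvmx M)).
  rewrite eU eV gram_helper.
  have -> : SS F N0 *m M *m (SS F N0 *m M)^T = M *m M^T.
    by rewrite trmx_mul -(SS_gram _ Hiso) !mulmxA.
  by rewrite -gram_helper !(mulmxKpV HU) !(mulmxKpV HV).
have F2 : forall j, a j *m X = - b j /\ b j *m X = a j.
  move=> j; set N' := maxn N0 j.+1.
  have HX' := solveJ N' Hiso; set X' := pinvmx _ *m _ in HX'.
  have Hpt := MMX_pt HX'.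
  have HMX : M *m X' = M *m X.
    rewrite HX; apply: pt_MMX => l Hl; apply: Hpt.
    by apply: leq_trans Hl (leq_maxl _ _).
  have Hj : (j < N')%N by rewrite leq_maxr.
  have [Ha Hb] := Hst j.
  have key : forall u : 'rV_n, (u <= M)%MS -> u *m X = u *m X'.
    move=> u Hu; rewrite -(mulmxKpV Hu).
    by rewrite -(mulmxA (u *m pinvmx M) M X') -(mulmxA (u *m pinvmx M) M X) HMX.
  rewrite (key _ Ha) (key _ Hb); exact: Hpt.
set E := row_base M.
have EM : (E :=: M)%MS by exact: eq_row_base.
have HEf : row_free E by exact: row_base_free.
have HEX : (E *m X <= E)%MS by rewrite EM; apply: F3'; rewrite -EM.
set K := E *m X *m pinvmx E.
have HKE : K *m E = E *m X by rewrite /K mulmxKpV.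
have HKK : K *m K = - 1%:M.
  apply: (row_free_inj HEf); rewrite /= -mulmxA HKE mulmxA HKE F4 ?mulNmx ?mul1mx //.
  by rewrite -EM.
have Hodd : ~~ odd (\rank M).
  apply/negP => Hodd; have := congr1 determinant HKK.
  rewrite det_mulmx -scaleN1r detZ det1 mulr1 -signr_odd.
  rewrite Hodd expr1 => Hd.
  have : 0 <= \det K * \det K by rewrite -expr2 sqr_ge0.
  by rewrite Hd ler0N1.
exists (\rank M), E, X; split.
- exact: HEf.
- exact: Hodd.
- by move=> j; rewrite !EM; exact: Hst j.
- exact: F2.
split.
- by move=> u; rewrite !EM; apply: F3'.
- by move=> u; rewrite !EM; apply: F4.
move=> u v; rewrite !EM => Hu Hv; rewrite /dp.
by rewrite F5.
Qed.

Unset Implicit Arguments. Set Strict Implicit.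
Local Close Scope ring_scope.


Lemma sum_n_fst (u : nat -> C) N : sum_n (fun j => fst (u j)) N = fst (@sum_n C_AbelianMonoid u N).
Proof.
induction N as [|N IH]; [by rewrite !sum_O | by rewrite !sum_Sn IH].
Qed.
Lemma sum_n_snd (u : nat -> C) N : sum_n (fun j => snd (u j)) N = snd (@sum_n C_AbelianMonoid u N).
Proof.
induction N as [|N IH]; [by rewrite !sum_O | by rewrite !sum_Sn IH].
Qed.

Lemma is_series_fst (u : nat -> C) (l : C) :
  @is_series C_AbsRing C_NormedModule u l -> is_series (fun j => fst (u j)) (fst l).
Proof.
intros H. unfold is_series in *.
apply filterlim_ext with (fun N => fst (@sum_n C_AbelianMonoid u N)).
{ intros N; now rewrite sum_n_fst. }
eapply filterlim_comp; [exact H|].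
destruct l as [l1 l2]. apply (@continuous_fst R_UniformSpace R_UniformSpace l1 l2).
Qed.
Lemma is_series_snd (u : nat -> C) (l : C) :
  @is_series C_AbsRing C_NormedModule u l -> is_series (fun j => snd (u j)) (snd l).
Proof.
intros H. unfold is_series in *.
apply filterlim_ext with (fun N => snd (@sum_n C_AbelianMonoid u N)).
{ intros N; now rewrite sum_n_snd. }
eapply filterlim_comp; [exact H|].
destruct l as [l1 l2]. apply (@continuous_snd R_UniformSpace R_UniformSpace l1 l2).
Qed.

Lemma is_series_zero : is_series (fun _ : nat => 0) 0.
Proof.
unfold is_series.
apply filterlim_ext with (fun _ => zero).
  by move=> N; rewrite /sum_n sum_n_m_const_zero.
exact: filterlim_const.
Qed.

Lemma is_series_big (I : Type) (r : seq I) (u : I -> nat -> R) (l : I -> R) :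
  (forall i, is_series (u i) (l i)) ->
  is_series (fun j => (\sum_(i <- r) u i j)%R) (\sum_(i <- r) l i)%R.
Proof.
move=> H; elim: r => [|i r IH].
  rewrite big_nil; apply: is_series_ext is_series_zero => j; by rewrite big_nil.
rewrite big_cons; apply: is_series_ext (is_series_plus _ _ _ _ (H i) IH).
by move=> j; rewrite big_cons.
Qed.

Lemma is_derive_big (I : Type) (r : seq I) (u : I -> R -> R) (du : I -> R) x :
  (forall i, is_derive (u i) x (du i)) ->
  is_derive (fun t => (\sum_(i <- r) u i t)%R) x (\sum_(i <- r) du i)%R.
Proof.
move=> H; elim: r => [|i r IH].
  rewrite big_nil; apply: is_derive_ext (is_derive_const (0:R) x) => t; by rewrite big_nil.
rewrite big_cons; apply: is_derive_ext (is_derive_plus _ _ _ _ _ (H i) IH).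
by move=> t; rewrite big_cons.
Qed.

Lemma CV_pos (a : nat -> R) : (exists l, is_series (fun k => a k * 1 ^ k) l) ->
  Rbar_lt 0 (CV_radius a).
Proof.
move=> [l Hl].
case: (Rbar_lt_le_dec 0 (CV_radius a)) => // Hle.
exfalso; apply: (CV_disk_outside a 1).
  apply: Rbar_le_lt_trans Hle _; rewrite /= Rabs_R1; exact: Rlt_0_1.
apply: ex_series_lim_0; by exists l.
Qed.

Lemma pseries_uniq (a : nat -> R) :
  (forall x, is_series (fun k => a k * x ^ k) 0) -> forall k, a k = 0.
Proof.
move=> H k.
have Hz : forall x, is_series (fun k => (fun _ : nat => 0) k * x ^ k) 0.
  move=> x; apply: is_series_ext is_series_zero => j; by rewrite Rmult_0_l.
apply: (PSeries_ext_recip a (fun _ => 0) k).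
- apply: CV_pos; by exists 0.
- apply: CV_pos; by exists 0.
apply: filter_forall => x.
rewrite (is_pseries_unique a x 0); last by apply/is_pseries_R.
rewrite (is_pseries_unique (fun _ => 0) x 0) //; by apply/is_pseries_R.
Qed.

From Stdlib Require Import ProofIrrelevance FunctionalExtensionality.

Definition toI n (i : 'I_n) : idx n := exist _ (nat_of_ord i) (elimT ltP (ltn_ord i)).
Definition ofI n (i : idx n) : 'I_n := Ordinal (introT ltP (proj2_sig i)).
Arguments toI {n}. Arguments ofI {n}.
Definition rv n (v : vec n) : 'rV[R]_n := \row_j v (toI j).
Definition vr n (r : 'rV[R]_n) : vec n := fun i => r 0%R (ofI i).

Arguments rv {n}. Arguments vr {n}.
Lemma toI_ofI n (i : idx n) : toI (ofI i) = i.
Proof. case: i => i Hi; rewrite /toI /ofI /=; f_equal; exact: proof_irrelevance. Qed.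
Lemma ofI_toI n (i : 'I_n) : ofI (toI i) = i.
Proof. by apply: val_inj. Qed.
Lemma vr_rv n (v : vec n) : vr (rv v) = v.
Proof. apply: functional_extensionality => i; by rewrite /vr /rv mxE toI_ofI. Qed.
Lemma rv_vr n (r : 'rV[R]_n) : rv (vr r) = r.
Proof. apply/matrixP => i j; by rewrite /vr /rv mxE ofI_toI [i]ord1. Qed.
Lemma rv_inj n (u v : vec n) : rv u = rv v -> u = v.
Proof. by move=> H; rewrite -(vr_rv _ u) H vr_rv. Qed.

Lemma rsum_big m f : rsum m f = (\sum_(i < m) f i)%R.
Proof. elim: m => [|m IH] /=; first by rewrite big_ord0. by rewrite big_ord_recr IH. Qed.

Lemma fsumR_big n f : fsumR n f = (\sum_(i < n) f (toI i))%R.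
Proof.
rewrite /fsumR rsum_big; apply: eq_bigr => i _.
case: (Compare_dec.lt_dec i n) => [H|H]; last by exfalso; apply: H; exact: (elimT ltP (ltn_ord i)).
by rewrite /toI; f_equal; f_equal; exact: proof_irrelevance.
Qed.

Lemma dotR_dp n u v : dotR n u v = dp (rv u) (rv v).
Proof.
rewrite /dotR fsumR_big /dp !mxE; apply: eq_bigr => i _; by rewrite !mxE.
Qed.

Definition EM n m (e : nat -> vec n) : 'M[R]_(m, n) := \matrix_(j < m) rv (e j).
Arguments EM {n}.

Lemma rv_lincomb n m a e : rv (lincomb n m a e) = ((\row_(j < m) a j) *m EM m e)%R.
Proof.
apply/matrixP => i l; rewrite /rv /lincomb !mxE rsum_big; apply: eq_bigr => j _.
by rewrite /EM !mxE.
Qed.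

Lemma in_span_sub n m e v : in_span n m e v <-> (rv v <= EM m e)%MS.
Proof.
split.
  by move=> [a ->]; rewrite rv_lincomb submxMl.
move/submxP => [D HD].
case: m e D HD => [|m] e D HD.
  exists (fun _ => 0); apply: rv_inj; rewrite rv_lincomb HD; congr (_ *m _)%R.
  by apply/matrixP => i [].
exists (fun j => D 0%R (inord j)).
apply: rv_inj; rewrite rv_lincomb HD; congr (_ *m _)%R.
apply/matrixP => i j; by rewrite !mxE [i]ord1 inord_val.
Qed.

Lemma lin_indep_free n m e : row_free (EM m e) -> lin_indep n m e.
Proof.
move=> Hf a Ha j Hj.
have H0 : ((\row_(j < m) a j) *m EM m e = 0 *m EM m e)%R.
  by rewrite mul0mx -rv_lincomb Ha; apply/matrixP => x y; rewrite !mxE.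
have := row_free_inj Hf H0 => /matrixP /(_ 0%R (Ordinal (introT ltP Hj))).
by rewrite !mxE.
Qed.

Definition aC n (c : nat -> idx n -> C) j : 'rV[R]_n := \row_i fst (c j (toI i)).
Definition bC n (c : nat -> idx n -> C) j : 'rV[R]_n := \row_i snd (c j (toI i)).
Definition REr n (h : idx n -> R -> R -> R) x y : 'rV[R]_n := \row_i (pdx (h (toI i)) x y / 2).
Definition IMr n (h : idx n -> R -> R -> R) x y : 'rV[R]_n := \row_i (- pdy (h (toI i)) x y / 2).

Arguments aC {n}. Arguments bC {n}. Arguments REr {n}. Arguments IMr {n}.
Definition Hser_t n (h : idx n -> R -> R -> R) (c : nat -> idx n -> C) :=
  forall (i : idx n) (x y : R),
      @is_series C_AbsRing C_NormedModule
        (fun j => Cmult (c j i) (Cpow (x, y) j)) (dz (h i) x y).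

Arguments Hser_t {n}.
Lemma SRE n h c : Hser_t h c -> forall x y p (W : 'M[R]_(n, p)) l,
  is_series (fun j => fst (Cpow (x,y) j) * (aC c j *m W)%R 0%R l
                    - snd (Cpow (x,y) j) * (bC c j *m W)%R 0%R l)
            ((REr h x y *m W)%R 0%R l).
Proof.
move=> H x y p W l.
have Hi : forall i : 'I_n, is_series
   (fun j => fst (Cmult (c j (toI i)) (Cpow (x, y) j)) * W i l) (REr h x y 0%R i * W i l).
  move=> i; apply: is_series_scal_r; rewrite mxE.
  exact: (is_series_fst _ _ (H (toI i) x y)).
have := @is_series_big _ (index_enum 'I_n) _ _ Hi.
have -> : ((REr h x y *m W)%R 0%R l) = (\sum_(i <- index_enum 'I_n) (REr h x y 0%R i * W i l))%R.
  by rewrite !mxE.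
apply: is_series_ext => j; rewrite !mxE /=.
rewrite !RmultE RminusE !mulr_sumr -sumrB; apply: eq_bigr => i _; rewrite !mxE.
rewrite -!RmultE -!RminusE; ring.
Qed.

Lemma SIM n h c : Hser_t h c -> forall x y p (W : 'M[R]_(n, p)) l,
  is_series (fun j => fst (Cpow (x,y) j) * (bC c j *m W)%R 0%R l
                    + snd (Cpow (x,y) j) * (aC c j *m W)%R 0%R l)
            ((IMr h x y *m W)%R 0%R l).
Proof.
move=> H x y p W l.
have Hi : forall i : 'I_n, is_series
   (fun j => snd (Cmult (c j (toI i)) (Cpow (x, y) j)) * W i l) (IMr h x y 0%R i * W i l).
  move=> i; apply: is_series_scal_r; rewrite mxE.
  exact: (is_series_snd _ _ (H (toI i) x y)).
have := @is_series_big _ (index_enum 'I_n) _ _ Hi.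
have -> : ((IMr h x y *m W)%R 0%R l) = (\sum_(i <- index_enum 'I_n) (IMr h x y 0%R i * W i l))%R.
  by rewrite !mxE.
apply: is_series_ext => j; rewrite !mxE /=.
rewrite !RmultE ?RplusE !mulr_sumr -big_split; apply: eq_bigr => i _; rewrite !mxE.
rewrite -?RmultE -?RplusE /=.
rewrite -?RplusE. ring.
Qed.

Lemma csum_fst m f : fst (csum m f) = rsum m (fun i => fst (f i)).
Proof. elim: m => [|m IH] //=; by rewrite IH. Qed.
Lemma csum_snd m f : snd (csum m f) = rsum m (fun i => snd (f i)).
Proof. elim: m => [|m IH] //=; by rewrite IH. Qed.

Lemma fsumC_fst n f : fst (fsumC n f) = fsumR n (fun i => fst (f i)).
Proof.
rewrite /fsumC /fsumR csum_fst; congr rsum; apply: functional_extensionality => i.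
by case: (Compare_dec.lt_dec i n).
Qed.
Lemma fsumC_snd n f : snd (fsumC n f) = fsumR n (fun i => snd (f i)).
Proof.
rewrite /fsumC /fsumR csum_snd; congr rsum; apply: functional_extensionality => i.
by case: (Compare_dec.lt_dec i n).
Qed.

Lemma gC_fst n (c : nat -> idx n -> C) m k :
  fst (gC n (c m) (c k)) = (dp (aC c m) (aC c k) - dp (bC c m) (bC c k))%R.
Proof.
rewrite /gC fsumC_fst fsumR_big /dp !mxE -sumrB; apply: eq_bigr => i _.
by rewrite !mxE.
Qed.
Lemma gC_snd n (c : nat -> idx n -> C) m k :
  snd (gC n (c m) (c k)) = (dp (aC c m) (bC c k) + dp (bC c m) (aC c k))%R.
Proof.
rewrite /gC fsumC_snd fsumR_big /dp !mxE -big_split; apply: eq_bigr => i _.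
rewrite !mxE /=. rewrite -?RmultE -?RplusE. ring.
Qed.

Lemma gC_iso n (c : nat -> idx n -> C) :
  (forall m k, gC n (c m) (c k) = RtoC 0) <-> iso (aC c) (bC c).
Proof.
split.
  move=> H m k; have := H m k; move/(f_equal fst) => H1; have := H m k; move/(f_equal snd) => H2.
  rewrite gC_fst /= in H1; rewrite gC_snd /= in H2.
  split; [by apply/eqP; rewrite -subr_eq0 H1 | by apply/eqP; rewrite -addr_eq0 H2].
move=> H m k; have [H1 H2] := H m k.
apply: injective_projections.
  by rewrite gC_fst H1 subrr.
by rewrite gC_snd H2 addNr.
Qed.

Lemma Cpow_real x j : fst (Cpow (x, 0) j) = x ^ j /\ snd (Cpow (x, 0) j) = 0.
Proof.
elim: j => [|j [H1 H2]] /=; first by [].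
rewrite H1 H2; split; ring.
Qed.

Lemma ext0 (u : nat -> R) (F : R -> nat -> R) :
  (forall x, is_series (F x) 0) -> (forall x j, F x j = u j * x ^ j) -> forall j, u j = 0.
Proof.
move=> H1 H2; apply: pseries_uniq => x; apply: is_series_ext (H1 x) => j; exact: H2.
Qed.

Lemma dpT n (u v : 'rV[R]_n) : ((u *m v^T)%R 0%R 0%R) = dp u v.
Proof. by []. Qed.

Lemma iso_of_dp n h c : @Hser_t n h c ->
  (forall x y x' y', dp (REr h x y) (REr h x' y') = dp (IMr h x y) (IMr h x' y') /\
     (dp (REr h x y) (IMr h x' y') + dp (IMr h x y) (REr h x' y'))%R = 0) ->
  iso (aC c) (bC c).
Proof.
move=> Hs Hd.
have Hab : forall x y k, dp (aC c k) (REr h x y) = dp (bC c k) (IMr h x y) /\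
                         (dp (aC c k) (IMr h x y) + dp (bC c k) (REr h x y))%R = 0.
  move=> x y k; split.
    apply/eqP; rewrite -subr_eq0; apply/eqP; move: k.
    apply: (@ext0 _ (fun x' j => (fst (Cpow (x',0) j) * dp (aC c j) (REr h x y) - snd (Cpow (x',0) j) * dp (bC c j) (REr h x y)) - (fst (Cpow (x',0) j) * dp (bC c j) (IMr h x y) + snd (Cpow (x',0) j) * dp (aC c j) (IMr h x y)))).
      move=> x'; have H1 := SRE _ _ _ Hs x' 0 _ (REr h x y)^T%R 0%R.
      have H2 := SIM _ _ _ Hs x' 0 _ (IMr h x y)^T%R 0%R.
      have := is_series_minus _ _ _ _ H1 H2.
      by rewrite !dpT (Hd x' 0 x y).1 plus_opp_r.
    move=> x' j; have [-> ->] := Cpow_real x' j; rewrite -?RmultE -?RminusE; ring.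
  move: k; apply: (@ext0 _ (fun x' j => (fst (Cpow (x',0) j) * dp (aC c j) (IMr h x y) - snd (Cpow (x',0) j) * dp (bC c j) (IMr h x y)) + (fst (Cpow (x',0) j) * dp (bC c j) (REr h x y) + snd (Cpow (x',0) j) * dp (aC c j) (REr h x y)))).
    move=> x'; have H1 := SRE _ _ _ Hs x' 0 _ (IMr h x y)^T%R 0%R.
    have H2 := SIM _ _ _ Hs x' 0 _ (REr h x y)^T%R 0%R.
    have HH := is_series_plus _ _ _ _ H1 H2.
    have E : plus (dp (REr h x' 0) (IMr h x y)) (dp (IMr h x' 0) (REr h x y)) = 0 := (Hd x' 0 x y).2.
    rewrite !dpT E in HH; exact: HH.
  move=> x' j; have [-> ->] := Cpow_real x' j; rewrite -?RmultE -?RminusE -?RplusE; ring.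
move=> m k; split.
  apply/eqP; rewrite -subr_eq0; apply/eqP; move: m.
  apply: (@ext0 _ (fun x j => (fst (Cpow (x,0) j) * dp (aC c j) (aC c k) - snd (Cpow (x,0) j) * dp (bC c j) (aC c k)) - (fst (Cpow (x,0) j) * dp (bC c j) (bC c k) + snd (Cpow (x,0) j) * dp (aC c j) (bC c k)))).
    move=> x; have H1 := SRE _ _ _ Hs x 0 _ (aC c k)^T%R 0%R.
    have H2 := SIM _ _ _ Hs x 0 _ (bC c k)^T%R 0%R.
    have := is_series_minus _ _ _ _ H1 H2.
    by rewrite !dpT dpC (Hab x 0 k).1 dpC plus_opp_r.
  move=> x j; have [-> ->] := Cpow_real x j; rewrite -?RmultE -?RminusE; ring.
apply/eqP; rewrite -addr_eq0; apply/eqP; move: m.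
apply: (@ext0 _ (fun x j => (fst (Cpow (x,0) j) * dp (aC c j) (bC c k) - snd (Cpow (x,0) j) * dp (bC c j) (bC c k)) + (fst (Cpow (x,0) j) * dp (bC c j) (aC c k) + snd (Cpow (x,0) j) * dp (aC c j) (aC c k)))).
  move=> x; have H1 := SRE _ _ _ Hs x 0 _ (bC c k)^T%R 0%R.
  have H2 := SIM _ _ _ Hs x 0 _ (aC c k)^T%R 0%R.
  have HH := is_series_plus _ _ _ _ H1 H2.
  have E : plus (dp (REr h x 0) (bC c k)) (dp (IMr h x 0) (aC c k)) = 0.
    move: (Hab x 0 k).2; rewrite dpC [dp (bC c k) _]dpC /plus /= => H0.
    by rewrite RplusE addrC.
  rewrite !dpT E in HH; exact: HH.
move=> x j; have [-> ->] := Cpow_real x j; rewrite -?RmultE -?RminusE -?RplusE; ring.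
Qed.

Lemma deriv_mem n m (E : 'M[R]_(m, n)) (f : idx n -> R -> R) (b : vec n) x :
  (forall i, ex_derive (f i) x) ->
  (forall t, (rv (fun i => f i t - b i) <= E)%MS) ->
  (rv (fun i => Derive (f i) x) <= E)%MS.
Proof.
move=> Hd Hm; rewrite submxE; apply/eqP/matrixP => z l; rewrite [z]ord1.
set C := cokermx E.
have Hi : forall i : 'I_n, is_derive (fun t => (f (toI i) t - b (toI i)) * C i l) x
                                    (Derive (f (toI i)) x * C i l).
  move=> i.
  have H1 := is_derive_minus _ _ x _ _ (Derive_correct _ _ (Hd (toI i))) (is_derive_const (b (toI i)) x).
  have H2 := is_derive_scal _ x (C i l) _ H1.
  move: H2; rewrite /minus opp_zero plus_zero_r => H2.
  rewrite Rmult_comm; apply: is_derive_ext H2 => t; by rewrite Rmult_comm.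
have HD := @is_derive_big _ (index_enum 'I_n) _ _ x Hi.
have H0 : forall t, ((\sum_(i <- index_enum 'I_n) (f (toI i) t - b (toI i)) * C i l)%R) = 0.
  move=> t; have := Hm t; rewrite submxE => /eqP /matrixP /(_ 0%R l).
  rewrite !mxE => HE; apply: (etrans _ HE); apply: eq_bigr => i _; by rewrite !mxE.
have HD0 : is_derive (fun t => (\sum_(i <- index_enum 'I_n) (f (toI i) t - b (toI i)) * C i l)%R) x 0.
  apply: is_derive_ext (is_derive_const (0:R) x) => t; by rewrite H0.
have := is_derive_unique _ _ _ HD; rewrite (is_derive_unique _ _ _ HD0) => HH.
rewrite !mxE; apply: (etrans _ (esym HH)); apply: eq_bigr => i _; by rewrite !mxE.
Qed.

Lemma dotR_oppr n u v : dotR n u (fun i => - v i) = - dotR n u v.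
Proof.
rewrite /dotR !fsumR_big RoppE -sumrN; apply: eq_bigr => i _.
by rewrite -?RoppE -?RmultE; ring.
Qed.

Lemma dp_RR n (h : idx n -> R -> R -> R) x y x' y' :
  dp (REr h x y) (REr h x' y') =
  dotR n (fun i => pdx (h i) x y) (fun i => pdx (h i) x' y') / 4.
Proof.
rewrite /dotR fsumR_big /dp !mxE RdivE mulr_suml; apply: eq_bigr => i _; rewrite !mxE.
rewrite -RdivE -?RmultE.
suff H : forall a b : R, a / 2 * (b / 2) = a * b / 4 by apply: H.
move=> a b; field.
Qed.
Lemma dp_II n (h : idx n -> R -> R -> R) x y x' y' :
  dp (IMr h x y) (IMr h x' y') =
  dotR n (fun i => pdy (h i) x y) (fun i => pdy (h i) x' y') / 4.
Proof.
rewrite /dotR fsumR_big /dp !mxE RdivE mulr_suml; apply: eq_bigr => i _; rewrite !mxE.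
rewrite -RdivE -?RmultE.
suff H : forall a b : R, - a / 2 * (- b / 2) = a * b / 4 by apply: H.
move=> a b; field.
Qed.
Lemma dp_RI n (h : idx n -> R -> R -> R) x y x' y' :
  dp (REr h x y) (IMr h x' y') =
  - dotR n (fun i => pdx (h i) x y) (fun i => pdy (h i) x' y') / 4.
Proof.
rewrite /dotR fsumR_big /dp !mxE RdivE RoppE -sumrN mulr_suml; apply: eq_bigr => i _; rewrite !mxE.
rewrite -?RdivE -?RoppE -?RmultE.
suff H : forall a b : R, a / 2 * (- b / 2) = - (a * b) / 4 by apply: H.
move=> a b; field.
Qed.
Lemma dp_IR n (h : idx n -> R -> R -> R) x y x' y' :
  dp (IMr h x y) (REr h x' y') =
  - dotR n (fun i => pdy (h i) x y) (fun i => pdx (h i) x' y') / 4.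
Proof.
rewrite /dotR fsumR_big /dp !mxE RdivE RoppE -sumrN mulr_suml; apply: eq_bigr => i _; rewrite !mxE.
rewrite -?RdivE -?RoppE -?RmultE.
suff H : forall a b : R, - a / 2 * (b / 2) = - (a * b) / 4 by apply: H.
move=> a b; field.
Qed.

Lemma forward n h c : @Hser_t n h c -> (forall i, smooth2 (h i)) ->
  holomorphic_up_to_rigid_motion n h -> iso (aC c) (bC c).
Proof.
move=> Hs Hsm [b [k [e [J]]]] /= [Hind [Hmem [HJW [HJlin [HJJ [Hort HJh]]]]]].
have HWx : forall x y, in_span n (2 * k) e (fun i => pdx (h i) x y).
  move=> x y; apply/in_span_sub.
  apply: (@deriv_mem n (2 * k) (EM (2 * k) e) (fun i t => h i t y) b x).
    by move=> i; exact: (Hsm i nil x y).1.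
  by move=> t; apply/in_span_sub; exact: Hmem.
have HWy : forall x y, in_span n (2 * k) e (fun i => pdy (h i) x y).
  by move=> x y; rewrite -(HJh x y).1; apply: HJW.
have D1 : forall x y x' y', dotR n (fun i => pdx (h i) x y) (fun i => pdx (h i) x' y') =
                            dotR n (fun i => pdy (h i) x y) (fun i => pdy (h i) x' y').
  by move=> x y x' y'; rewrite -(HJh x y).1 -(HJh x' y').1 Hort.
have D2 : forall x y x' y', dotR n (fun i => pdy (h i) x y) (fun i => pdx (h i) x' y') =
                            - dotR n (fun i => pdx (h i) x y) (fun i => pdy (h i) x' y').
  move=> x y x' y'.
  have -> : (fun i => pdx (h i) x' y') = (fun i => - J (fun i => pdy (h i) x' y') i).
    rewrite (HJh x' y').2; apply: functional_extensionality => i; by rewrite Ropp_involutive.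
  by rewrite dotR_oppr -(HJh x y).1 Hort.
apply: iso_of_dp Hs _ => x y x' y'; split.
  by rewrite dp_RR dp_II D1.
rewrite dp_RI dp_IR D2 -?RdivE -?RoppE.
suff H : forall a : R, (- a / 4 + - - a / 4 = 0) by apply: H.
move=> a; field.
Qed.

Lemma const_of_deriv0 (g : R -> R) : (forall t, is_derive g t 0) -> forall a b, g a = g b.
Proof.
move=> H a b.
have [c [_ Hc]] := MVT_gen g a b (fun _ => 0) (fun x _ => H x)
  (fun x _ => proj2 (continuity_pt_filterlim g x) (ex_derive_continuous g x (ex_intro _ 0 (H x)))).
move: Hc; rewrite Rmult_0_l => Hc; apply: Rminus_diag_uniq_sym; exact: Hc.
Qed.

Lemma phi_dx n (h : idx n -> R -> R -> R) (Hsm : forall i, smooth2 (h i)) p (W : 'M[R]_(n, p)) l x y :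
  is_derive (fun t => (\sum_(i <- index_enum 'I_n) h (toI i) t y * W i l)%R) x
            (\sum_(i <- index_enum 'I_n) pdx (h (toI i)) x y * W i l)%R.
Proof.
apply: is_derive_big => i.
have := is_derive_scal _ x (W i l) _ (Derive_correct _ _ (Hsm (toI i) nil x y).1).
rewrite Rmult_comm => HH; apply: is_derive_ext HH => t; by rewrite Rmult_comm.
Qed.

Lemma phi_dy n (h : idx n -> R -> R -> R) (Hsm : forall i, smooth2 (h i)) p (W : 'M[R]_(n, p)) l x y :
  is_derive (fun t => (\sum_(i <- index_enum 'I_n) h (toI i) x t * W i l)%R) y
            (\sum_(i <- index_enum 'I_n) pdy (h (toI i)) x y * W i l)%R.
Proof.
apply: is_derive_big => i.
have := is_derive_scal _ y (W i l) _ (Derive_correct _ _ (proj1 (proj2 (Hsm (toI i) nil x y)))).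
rewrite Rmult_comm => HH; apply: is_derive_ext HH => t; by rewrite Rmult_comm.
Qed.

Lemma series_zero_unique (s : nat -> R) l : is_series s l -> (forall j, s j = 0) -> l = 0.
Proof.
move=> H Hs; rewrite -(is_series_unique _ _ H); apply: is_series_unique.
apply: is_series_ext is_series_zero => j; by rewrite Hs.
Qed.

Lemma sum_pdx n (h : idx n -> R -> R -> R) p (W : 'M[R]_(n, p)) l x y :
  (\sum_(i <- index_enum 'I_n) pdx (h (toI i)) x y * W i l)%R = 2 * (REr h x y *m W)%R 0%R l.
Proof.
rewrite !mxE RmultE mulr_sumr; apply: eq_bigr => i _; rewrite !mxE -?RmultE.
suff H : forall a b : R, a * b = 2 * (a / 2 * b) by apply: H.
move=> a b; field.
Qed.
Lemma sum_pdy n (h : idx n -> R -> R -> R) p (W : 'M[R]_(n, p)) l x y :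
  (\sum_(i <- index_enum 'I_n) pdy (h (toI i)) x y * W i l)%R = -2 * (IMr h x y *m W)%R 0%R l.
Proof.
rewrite !mxE RmultE mulr_sumr; apply: eq_bigr => i _; rewrite !mxE -?RmultE.
suff H : forall a b : R, a * b = -2 * (- a / 2 * b) by apply: H.
move=> a b; field.
Qed.

Lemma mem_backward n h c (Hs : @Hser_t n h c) (Hsm : forall i, smooth2 (h i)) m (E : 'M[R]_(m, n)) :
  (forall j, (aC c j <= E)%MS /\ (bC c j <= E)%MS) ->
  forall x y, (rv (fun i => h i x y - h i 0 0) <= E)%MS.
Proof.
move=> Hab x y; rewrite submxE; apply/eqP/matrixP => z l; rewrite [z]ord1.
set C := cokermx E.
have HaC : forall j, (aC c j *m C)%R 0%R l = 0 /\ (bC c j *m C)%R 0%R l = 0.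
  move=> j; have [Ha Hb] := Hab j; move: Ha Hb; rewrite !submxE => /eqP -> /eqP ->.
  by rewrite !mxE.
have HRE : forall x y, (REr h x y *m C)%R 0%R l = 0.
  move=> x' y'; apply: (@series_zero_unique _ _ (SRE _ _ _ Hs x' y' _ C l)) => j.
  by rewrite (HaC j).1 (HaC j).2 !Rmult_0_r Rminus_0_r.
have HIM : forall x y, (IMr h x y *m C)%R 0%R l = 0.
  move=> x' y'; apply: (@series_zero_unique _ _ (SIM _ _ _ Hs x' y' _ C l)) => j.
  by rewrite (HaC j).1 (HaC j).2 !Rmult_0_r Rplus_0_r.
set phi := fun x y => (\sum_(i <- index_enum 'I_n) h (toI i) x y * C i l)%R.
have Hx : forall y a b, phi a y = phi b y.
  move=> y' a b; apply: (const_of_deriv0 (fun t => phi t y')) => t.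
  have := phi_dx _ _ Hsm _ C l t y'; rewrite sum_pdx HRE Rmult_0_r; exact.
have Hy : forall x a b, phi x a = phi x b.
  move=> x' a b; apply: (const_of_deriv0 (fun t => phi x' t)) => t.
  have := phi_dy _ _ Hsm _ C l x' t; rewrite sum_pdy HIM Rmult_0_r; exact.
have Ephi : (rv (fun i => h i x y - h i 0 0) *m C)%R 0%R l = phi x y - phi 0 0.
  rewrite /phi !mxE RminusE -sumrB; apply: eq_bigr => i _; rewrite !mxE.
  by rewrite -?RminusE -?RmultE Rmult_minus_distr_r.
by rewrite Ephi (Hx y x 0) (Hy 0 y 0) Rminus_diag_eq // mxE.
Qed.

Lemma series_eq_unique (s t : nat -> R) a b : is_series s a -> is_series t b -> (forall j, s j = t j) -> a = b.
Proof.
move=> Ha Hb Hst; rewrite -(is_series_unique _ _ Ha) -(is_series_unique _ _ Hb).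
by apply: Series_ext.
Qed.

Lemma RE_X n h c (Hs : @Hser_t n h c) (X : 'M[R]_n) :
  (forall j, (aC c j *m X = - bC c j)%R /\ (bC c j *m X = aC c j)%R) ->
  forall x y, (REr h x y *m X = - IMr h x y)%R /\ (IMr h x y *m X = REr h x y)%R.
Proof.
move=> HX x y; split; apply/matrixP => z l; rewrite [z]ord1.
  have H2 := is_series_opp _ _ (SIM _ _ _ Hs x y _ 1%:M%R l).
  rewrite mulmx1 in H2; rewrite [in RHS]mxE.
  apply: (@series_eq_unique _ _ _ _ (SRE _ _ _ Hs x y _ X l) H2) => j.
  rewrite (HX j).1 (HX j).2 !mulmx1 !mxE /opp /=.
  rewrite -?RoppE -?RmultE /Hierarchy.opp /=; ring.
have H2 := SRE _ _ _ Hs x y _ 1%:M%R l.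
rewrite mulmx1 in H2.
apply: (@series_eq_unique _ _ _ _ (SIM _ _ _ Hs x y _ X l) H2) => j.
rewrite (HX j).1 (HX j).2 !mulmx1 !mxE.
by rewrite -?RoppE -?RmultE; ring.
Qed.

Lemma rv_lin n a (u v : vec n) : rv (fun i => a * u i + v i) = (a *: rv u + rv v)%R.
Proof. by apply/matrixP => z l; rewrite !mxE. Qed.
Lemma rv_opp n (u : vec n) : rv (fun i => - u i) = (- rv u)%R.
Proof. by apply/matrixP => z l; rewrite !mxE. Qed.
Lemma rv_hx n (h : idx n -> R -> R -> R) x y : rv (fun i => pdx (h i) x y) = (2 *: REr h x y)%R.
Proof.
apply/matrixP => z l; rewrite !mxE -?RmultE.
suff H : forall a : R, a = 2 * (a / 2) by apply: H.
move=> a; field.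
Qed.
Lemma rv_hy n (h : idx n -> R -> R -> R) x y : rv (fun i => pdy (h i) x y) = ((-2) *: IMr h x y)%R.
Proof.
apply/matrixP => z l; rewrite !mxE -?RmultE.
suff H : forall a : R, a = -2 * (- a / 2) by apply: H.
move=> a; field.
Qed.

Lemma backward n h c : @Hser_t n h c -> (forall i, smooth2 (h i)) ->
  iso (aC c) (bC c) -> holomorphic_up_to_rigid_motion n h.
Proof.
move=> Hs Hsm Hiso.
have [r [E [X [Hfree Hodd Hab HX [HXW HXX HXo]]]]] := LA_main Hiso.
set k := r./2.
have Hk : (2 * k)%N = r.
  by rewrite /k mulnC muln2 -{2}(odd_double_half r) (negbTE Hodd) add0n.
set e := fun j => vr (\sum_(i < r | val i == j) row i E)%R.
have HEM : EM r e = E.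
  apply/row_matrixP => i; rewrite /EM rowK /e rv_vr.
  by rewrite (big_pred1 i) // => j /=; apply/eqP/eqP => [/val_inj|->].
set J := fun v : vec n => vr (rv v *m X)%R.
have HRI := RE_X _ _ _ Hs _ HX.
have Hk' : Nat.mul 2 k = r by exact: Hk.
exists (fun i => h i 0 0), k, e, J; rewrite Hk' /=.
split.
  by apply: lin_indep_free; rewrite HEM.
split.
  move=> x y; apply/in_span_sub; rewrite HEM; exact: mem_backward.
split.
  move=> u /in_span_sub; rewrite HEM => Hu; apply/in_span_sub; rewrite HEM /J rv_vr; exact: HXW.
split.
  move=> u v a _ _; apply: rv_inj; rewrite /J rv_vr !rv_lin !rv_vr mulmxDl scalemxAl //.
split.
  move=> u /in_span_sub; rewrite HEM => Hu; apply: rv_inj; rewrite /J !rv_vr rv_opp; exact: HXX.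
split.
  move=> u v /in_span_sub Hu /in_span_sub Hv; rewrite HEM in Hu Hv.
  by rewrite !dotR_dp /J !rv_vr HXo.
move=> x y; split; apply: rv_inj; rewrite /J rv_vr ?rv_opp rv_hx rv_hy -scalemxAl.
  by rewrite (HRI x y).1 scalerN -scaleNr.
rewrite (HRI x y).2 -scaleNr; congr (_ *: _)%R.
Qed.


Theorem theorem2p1 (n : nat) (h : idx n -> R -> R -> R) (c : nat -> idx n -> C) :
  branched_minimal_immersion n h ->
  (forall (i : idx n) (x y : R),
      @is_series C_AbsRing C_NormedModule
        (fun j => Cmult (c j i) (Cpow (x, y) j)) (dz (h i) x y)) ->
  (holomorphic_up_to_rigid_motion n h <->
   forall m k : nat, gC n (c m) (c k) = RtoC 0).
Proof.
move=> [_ [Hsm _]] Hser.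
have Hs : Hser_t h c := Hser.
split.
  move=> Hh; apply/gC_iso; exact: forward.
move=> Hg; apply: backward => //; exact/gC_iso.
Qed.
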